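(* Let $\mathcal{Y}$ be finite (with the discrete topology) and let $\Gamma\colon\Delta(\mathcal{Y})\to2^{\mathcal{V}}$ be a property identified by $\nu$. For every $\gamma\in\mathcal{V}$ with $\Gamma^{-1}(\gamma)\ne\emptyset$, $$\{g\in C(\mathcal{Y}):g\le\alpha\nu_\gamma\text{ for some }\alpha\in\mathbb{R}\}=\mathcal{G}_{\Gamma^{-1}(\gamma)},$$ i.e. no closure is needed.
   Context: For finite $\mathcal{Y}$, $C(\mathcal{Y})\cong\mathbb{R}^{\mathcal{Y}}$ with coordinatewise order, $\Delta(\mathcal{Y})$ is the probability simplex, $\mathbb{E}_\phi[f]=\sum_y\phi(y)f(y)$. Level set: $\Gamma^{-1}(\gamma)=\{\phi\in\Delta(\mathcal{Y}):\gamma\in\Gamma(\phi)\}$. A function $\nu\colon\mathcal{Y}\times\mathcal{V}\to\mathbb{R}$, $\nu_\gamma:=\nu(\cdot,\gamma)$, \emph{identifies} $\Gamma$ if for all $\phi\in\Delta(\mathcal{Y})$, $\gamma\in\mathcal{V}$: $\mathbb{E}_\phi[\nu_\gamma]=0\iff\gamma\in\Gamma(\phi)$. Available gambles: $\mathcal{G}_{\mathcal{P}}=\{g\in C(\mathcal{Y}):\sup_{\phi\in\mathcal{P}}\mathbb{E}_\phi[g]\le0\}$. *)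

(* Defs.v *)
From mathcomp Require Import all_boot all_order all_algebra.
From mathcomp Require Import all_classical all_reals ereal.
Set Implicit Arguments. Unset Strict Implicit. Unset Printing Implicit Defensive.
Import Order.TTheory GRing.Theory Num.Theory.
Local Open Scope ring_scope.
Local Open Scope classical_set_scope.

(* Finite outcome space Y (a finType); C(Y) = Y -> R (discrete topology). *)

Definition simplex (R : realType) (Y : finType) : set (Y -> R) :=
  [set phi | (forall y, 0 <= phi y) /\ \sum_(y : Y) phi y = 1].

Definition expect (R : realType) (Y : finType) (phi f : Y -> R) : R :=
  \sum_(y : Y) phi y * f y.

Definition level_set (R : realType) (Y : finType) (V : Type)
  (Gamma : (Y -> R) -> set V) (gamma : V) : set (Y -> R) :=
  [set phi | @simplex R Y phi /\ Gamma phi gamma].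

Definition identifies (R : realType) (Y : finType) (V : Type)
  (nu : Y -> V -> R) (Gamma : (Y -> R) -> set V) : Prop :=
  forall phi, @simplex R Y phi -> forall gamma : V,
    expect phi (fun y => nu y gamma) = 0 <-> Gamma phi gamma.

Definition available_gambles (R : realType) (Y : finType) (P : set (Y -> R))
  : set (Y -> R) :=
  [set g | (ereal_sup [set (expect phi g)%:E | phi in P] <= 0)%E].

(* Main.v *)
Require Import Defs.
From mathcomp Require Import all_boot all_order all_algebra.
From mathcomp Require Import all_classical all_reals ereal.
From mathcomp Require Import lra.
Import Order.TTheory GRing.Theory Num.Theory.
Local Open Scope ring_scope.
Local Open Scope classical_set_scope.

Lemma sum_ind (R : realType) (Y : finType) (y : Y) (h : Y -> R) :
  \sum_(z : Y) (z == y)%:R * h z = h y.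
Proof.
rewrite (bigD1 y) //= eqxx mul1r big1 ?addr0 // => z /negbTE ->.
by rewrite mul0r.
Qed.

Theorem mainTheorem9 (R : realType) (Y : finType) (V : Type)
  (Gamma : (Y -> R) -> set V) (nu : Y -> V -> R) :
  identifies nu Gamma ->
  forall gamma : V, level_set Gamma gamma !=set0 ->
    [set g : Y -> R | exists alpha : R, forall y, g y <= alpha * nu y gamma]
    = available_gambles (level_set Gamma gamma).
Proof.
move=> hid gamma _.
set n := fun y => nu y gamma.
apply/seteqP; split => g /=.
- move=> [alpha Ha]; rewrite /available_gambles /=.
  apply: ub_ereal_sup => _ [phi [[phi0 phi1] Gp] <-].
  rewrite lee_fin.
  have e0 : expect phi n = 0 by apply/(hid phi (conj phi0 phi1)).
  have : expect phi g <= expect phi (fun y => alpha * n y).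
    by apply: ler_sum => y _; apply: ler_wpM2l.
  rewrite /expect.
  under [X in _ <= X -> _]eq_bigr => y _ do rewrite mulrCA.
  by rewrite -mulr_sumr; move: e0; rewrite /expect => -> ; rewrite mulr0.
- rewrite /available_gambles /= => Hs.
  have key : forall phi, simplex phi -> expect phi n = 0 -> expect phi g <= 0.
    move=> phi sp e0.
    have : ((expect phi g)%:E <= ereal_sup [set (expect phi0 g)%:E | phi0 in level_set Gamma gamma])%E.
      apply: ereal_sup_ubound; exists phi => //; split => //.
      exact/(hid phi sp).
    by move=> /le_trans /(_ Hs); rewrite lee_fin.
  have Z : forall y, n y = 0 -> g y <= 0.
    move=> y ny.
    have := key (fun z => (z == y)%:R).
    rewrite /expect !sum_ind; apply => //; split.
      by move=> z; rewrite ler0n.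
    by under eq_bigr => z _ do rewrite -[(z == y)%:R]mulr1; rewrite sum_ind.
  have PN : forall y y', 0 < n y -> n y' < 0 -> g y / n y <= g y' / n y'.
    move=> y y' py ny'.
    have yy' : y' != y by apply/eqP => E; move: py; rewrite -E; lra.
    set d := n y - n y'.
    have dp : 0 < d by rewrite /d; lra.
    set a := - n y' / d. set b := n y / d.
    have a0 : 0 <= a by rewrite /a divr_ge0 //; lra.
    have b0 : 0 <= b by rewrite /b divr_ge0 //; lra.
    have ab : a + b = 1 by rewrite /a /b -mulrDl /d addrC divff // gt_eqF.
    have E : forall h : Y -> R, expect (fun z => (z == y)%:R * a + (z == y')%:R * b) h
                             = a * h y + b * h y'.
      move=> h; rewrite /expect.
      under eq_bigr => z _ do rewrite mulrDl -!mulrA.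
      by rewrite big_split /= !sum_ind !mulrA.
    have := key (fun z => (z == y)%:R * a + (z == y')%:R * b).
    rewrite !E.
    have -> : a * n y + b * n y' = 0.
      by rewrite /a /b mulrAC (mulrAC (n y)) -mulrDl mulNr (mulrC (n y')) addNr mul0r.
    move=> H; have {H} H : a * g y + b * g y' <= 0.
      apply: H => //; split.
        by move=> z; apply: addr_ge0; apply: mulr_ge0 => //; rewrite ler0n.
      transitivity (expect (fun z => (z == y)%:R * a + (z == y')%:R * b) (fun _ => 1)).
        by rewrite /expect; apply: eq_bigr => z _; rewrite mulr1.
      by rewrite E !mulr1.
    have H2 : - n y' * g y + n y * g y' <= 0.
      have eq : a * g y + b * g y' = (- n y' * g y + n y * g y') / d.
        by rewrite /a /b mulrDl (mulrAC (- n y')) (mulrAC (n y)).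
      by move: H; rewrite eq pmulr_lle0 // invr_gt0.
    set u := g y / n y. set v := g y' / n y'.
    have hu : g y = u * n y by rewrite /u divfK // gt_eqF.
    have hv : g y' = v * n y' by rewrite /v divfK // lt_eqF.
    move: H2; rewrite hu hv => H2.
    have : n y * (- n y') * (u - v) <= 0 by move: H2; nra.
    rewrite pmulr_rle0 ?subr_le0 //; nra.
  set S := \sum_(y : Y) `|g y / n y|.
  exists (\big[Order.max/ - S]_(y | 0 < n y) (g y / n y)).
  move=> y.
  have [py | ny | zy] := ltgtP 0 (n y).
  + have : g y / n y <= \big[Order.max/ - S]_(y | 0 < n y) (g y / n y)
      by exact: (le_bigmax_cond _ _ py).
    by rewrite ler_pdivrMr.
  + have : \big[Order.max/ - S]_(y | 0 < n y) (g y / n y) <= g y / n y.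
      apply: bigmax_le => [|z pz]; last exact: PN.
      have : `|g y / n y| <= S.
        by rewrite /S (bigD1 y) //= lerDl sumr_ge0.
      by move/ler_normlP => [h1 _]; rewrite lerNl.
    by rewrite ler_ndivlMr.
  + have zy2 : nu y gamma = 0 by rewrite [RHS]zy.
    rewrite zy2 mulr0; exact: (Z y (esym zy)).
Qed.
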